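(* Assume the standing assumptions (A1)–(A4). If $\rho> L_0/\beta$, then for all $p\in\mathbb R^{n_p}$ $$\psi(p)\le \frac{L_\psi}{2}\Bigl[d(p)+\frac{\kappa_0}{\sqrt\rho}\Bigr]^2,\qquad \kappa_0:=\frac{2L_0}{\beta}\sqrt{\frac{2}{\mu_0}\psi(p_u)} .$$ In particular $\psi(p^* )\le \dfrac{L_\psi\kappa_0^2}{2\rho}$.
   Context: Let $n_p,n_c\ge 1$, let $f_0:\mathbb R^{n_p}\to\mathbb R$ and $c_i:\mathbb R^{n_p}\to\mathbb R$ ($i=1,\dots,n_c$) be continuously differentiable, and let $\{1,\dots,n_c\}=I_s\cup I_h$ be a partition into disjoint sets of soft and hard constraint indices. The original problem is $\min_{p\in\mathbb R^{n_p}} f_0(p)$ subject to $c_i(p)\le 0$ for all $i$; $f^{opt}$ denotes its optimal value and $p^{opt}$ an optimal solution (assumed to exist). For a fixed $\varepsilon_\psi>0$ let $\psi(p):=\sum_{i\in I_s}[\max\{0,c_i(p)\}]^2+\sum_{i\in I_h}[\max\{0,c_i(p)+\varepsilon_\psi\}]^2$, and for a penalty parameter $\rho>0$ let $f(p):=f_0(p)+\rho\,\psi(p)$. A differentiable function $\ell$ belongs to $\mathcal F^1_L$ if $\ell(p_2)\le \ell(p_1)+\langle \ell'(p_1),p_2-p_1\rangle+\frac L2\|p_2-p_1\|^2$ for all $p_1,p_2$, and is $\mu$-strongly convex if $\ell(p_2)\ge \ell(p_1)+\langle \ell'(p_1),p_2-p_1\rangle+\frac \mu2\|p_2-p_1\|^2$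 for all $p_1,p_2$. Standing assumptions: (A1) $f_0(p)\ge 0$ for all $p$; (A2) $f_0\in\mathcal F^1_{L_0}$ and $\psi\in\mathcal F^1_{L_\psi}$ for some reals $L_0,L_\psi\ge 0$; (A3) $f_0$ is $\mu_0$-strongly convex for some $\mu_0>0$, and $\psi$ is convex; (A4) the set $\mathcal A:=\{p:\psi(p)=0\}$ is nonempty and there is $\beta>0$ with $\psi(p)\ge \beta\,[d(p,\mathcal A)]^2$ for all $p$, where $d(p,\mathcal A):=\min_{z\in\mathcal A}\|z-p\|$. Notation: $\|\cdot\|$ is the Euclidean norm; $p^*$ is the unique minimizer of $f$ over $\mathbb R^{n_p}$; $p_u$ is the unique unconstrained minimizer of $f_0$; $p_a$ is a fixed point with $\psi(p_a)=0$; $D_0:=\sup\{\|f_0'(p)\|:\ f_0(p)\le f_0(p_a)\}$; $d(p):=\|p-p^*\|$. *)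

(* Defs.v *)
From Stdlib Require Fin.
From Stdlib Require Import Reals Lra ClassicalEpsilon.
Open Scope R_scope.

Definition vec (n : nat) : Type := Fin.t n -> R.

Fixpoint fsum (n : nat) : (Fin.t n -> R) -> R :=
  match n with
  | O => fun _ => 0
  | S m => fun a => a Fin.F1 + fsum m (fun i => a (Fin.FS i))
  end.

Definition vadd {n} (x y : vec n) : vec n := fun i => x i + y i.
Definition vsub {n} (x y : vec n) : vec n := fun i => x i - y i.
Definition vscal {n} (t : R) (x : vec n) : vec n := fun i => t * x i.
Definition edot {n} (x y : vec n) : R := fsum n (fun i => x i * y i).
Definition enorm {n} (x : vec n) : R := sqrt (edot x x).

Definition has_grad {n} (f : vec n -> R) (g : vec n -> vec n) : Prop :=
  forall p eps, 0 < eps -> exists del, 0 < del /\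
    forall h, enorm h < del ->
      Rabs (f (vadd p h) - f p - edot (g p) h) <= eps * enorm h.

Definition vcontinuous {n} (g : vec n -> vec n) : Prop :=
  forall p eps, 0 < eps -> exists del, 0 < del /\
    forall q, enorm (vsub q p) < del -> enorm (vsub (g q) (g p)) < eps.

Definition cont_diff {n} (f : vec n -> R) : Prop :=
  exists g, has_grad f g /\ vcontinuous g.

Definition in_F1L {n} (f : vec n -> R) (L : R) : Prop :=
  exists g, has_grad f g /\
    forall p1 p2, f p2 <= f p1 + edot (g p1) (vsub p2 p1)
                          + L / 2 * (enorm (vsub p2 p1))^2.

Definition strongly_convex {n} (f : vec n -> R) (mu : R) : Prop :=
  exists g, has_grad f g /\
    forall p1 p2, f p2 >= f p1 + edot (g p1) (vsub p2 p1)
                          + mu / 2 * (enorm (vsub p2 p1))^2.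

Definition convex_fun {n} (f : vec n -> R) : Prop :=
  forall x y t, 0 <= t <= 1 ->
    f (vadd (vscal t x) (vscal (1 - t) y)) <= t * f x + (1 - t) * f y.

Definition is_inf (S : R -> Prop) (m : R) : Prop :=
  (forall r, S r -> m <= r) /\ (forall b, (forall r, S r -> b <= r) -> b <= m).

(* distance from p to a set A: d(p,A) = inf_{z in A} ||z - p||
   (equals the min of the paper whenever it is attained). *)
Definition dist_set {n} (A : vec n -> Prop) (p : vec n) : R :=
  epsilon (inhabits 0)
    (fun m => is_inf (fun r => exists z, A z /\ r = enorm (vsub z p)) m).

(* penalty function psi; soft i = true iff i in I_s, otherwise i in I_h *)
Definition psi_fun {np nc} (c : Fin.t nc -> vec np -> R) (soft : Fin.t nc -> bool)
  (eps_psi : R) (p : vec np) : R :=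
  fsum nc (fun i => if soft i then (Rmax 0 (c i p))^2
                    else (Rmax 0 (c i p + eps_psi))^2).

(* Main.v *)
Require Import Defs.
From Stdlib Require Import Reals Lra ClassicalEpsilon.
Open Scope R_scope.

Lemma fsum_ext n (a b : Fin.t n -> R) : (forall i, a i = b i) -> fsum n a = fsum n b.
Proof.
  revert a b; induction n; simpl; intros a b H; [reflexivity|].
  rewrite H. f_equal. apply IHn. intros; apply H.
Qed.

Lemma fsum_add n (a b : Fin.t n -> R) :
  fsum n (fun i => a i + b i) = fsum n a + fsum n b.
Proof.
  revert a b; induction n; simpl; intros a b; [ring|].
  rewrite (IHn (fun i => a (Fin.FS i)) (fun i => b (Fin.FS i))). ring.
Qed.

Lemma fsum_scal n c (a : Fin.t n -> R) :
  fsum n (fun i => c * a i) = c * fsum n a.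
Proof.
  revert a; induction n; simpl; intros a; [ring|].
  rewrite (IHn (fun i => a (Fin.FS i))). ring.
Qed.

Lemma fsum_nonneg n (a : Fin.t n -> R) : (forall i, 0 <= a i) -> 0 <= fsum n a.
Proof.
  revert a; induction n; simpl; intros a H; [lra|].
  specialize (IHn (fun i => a (Fin.FS i)) (fun i => H _)). specialize (H Fin.F1). lra.
Qed.

Lemma edot_nonneg n (x : vec n) : 0 <= edot x x.
Proof. unfold edot. apply fsum_nonneg. intros i. nra. Qed.

Lemma enorm_nonneg n (x : vec n) : 0 <= enorm x.
Proof. unfold enorm. apply sqrt_pos. Qed.

Lemma enorm_sq n (x : vec n) : enorm x ^ 2 = edot x x.
Proof. unfold enorm. apply pow2_sqrt, edot_nonneg. Qed.

Lemma edot_comm n (x y : vec n) : edot x y = edot y x.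
Proof. unfold edot. apply fsum_ext. intros; ring. Qed.

Lemma edot_amgm n (x y : vec n) s : 0 < s ->
  edot x y <= edot x x / (2*s) + s/2 * edot y y.
Proof.
  intros Hs. unfold edot.
  assert (H : 0 <= fsum n (fun i => /(2*s) * ((x i - s * y i)^2))).
  { apply fsum_nonneg. intros i. apply Rmult_le_pos.
    left; apply Rinv_0_lt_compat; lra. apply pow2_ge_0. }
  rewrite (fsum_ext n _ (fun i => /(2*s) * (x i * x i) + (s/2 * (y i * y i) + (-1) * (x i * y i)))) in H.
  2: { intros i. field. lra. }
  rewrite fsum_add, fsum_add, !fsum_scal in H. unfold Rdiv. lra.
Qed.

Lemma cs0 n (x y : vec n) : edot x x = 0 -> edot x y <= 0.
Proof.
  intros H0. set (D := edot x y). set (Y := edot y y).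
  assert (HY : 0 <= Y) by apply edot_nonneg.
  destruct (Rle_or_lt D 0) as [h|h]; [exact h|].
  assert (Hs : 0 < D / (Y+1)) by (apply Rdiv_lt_0_compat; lra).
  pose proof (edot_amgm n x y _ Hs) as H. fold D Y in H. rewrite H0 in H.
  assert (E : D / (Y + 1) / 2 * Y * (2 * (Y+1)) = D * Y) by (field; lra).
  assert (E2 : 0 / (2 * (D / (Y + 1))) = 0) by (field; lra).
  rewrite E2 in H. nra.
Qed.

Lemma cs n (x y : vec n) : edot x y <= enorm x * enorm y.
Proof.
  destruct (Req_dec (edot x x) 0) as [Hx|Hx].
  { unfold enorm at 1; rewrite Hx, sqrt_0. rewrite Rmult_0_l. now apply cs0. }
  destruct (Req_dec (edot y y) 0) as [Hy|Hy].
  { unfold enorm at 2; rewrite Hy, sqrt_0. rewrite Rmult_0_r. rewrite edot_comm. now apply cs0. }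
  pose proof (edot_nonneg n x) as Nx. pose proof (edot_nonneg n y) as Ny.
  assert (Ha : 0 < enorm x) by (unfold enorm; apply sqrt_lt_R0; lra).
  assert (Hb : 0 < enorm y) by (unfold enorm; apply sqrt_lt_R0; lra).
  assert (Hs : 0 < enorm x / enorm y) by (apply Rdiv_lt_0_compat; lra).
  pose proof (edot_amgm n x y _ Hs) as H.
  rewrite <- (enorm_sq n x), <- (enorm_sq n y) in H.
  replace (enorm x ^ 2 / (2 * (enorm x / enorm y)) + enorm x / enorm y / 2 * enorm y ^ 2)
    with (enorm x * enorm y) in H by (field; lra). exact H.
Qed.

Lemma enorm_sym n (x y : vec n) : enorm (vsub x y) = enorm (vsub y x).
Proof. unfold enorm, edot, vsub. f_equal. apply fsum_ext. intros; ring. Qed.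

Lemma triangle n (x y z : vec n) :
  enorm (vsub x z) <= enorm (vsub x y) + enorm (vsub y z).
Proof.
  set (u := vsub x y). set (v := vsub y z).
  assert (E : edot (vsub x z) (vsub x z) = edot u u + (2 * edot u v + edot v v)).
  { unfold edot. rewrite <- fsum_scal, <- !fsum_add. apply fsum_ext.
    intros i. unfold u, v, vsub. ring. }
  pose proof (cs n u v). pose proof (enorm_nonneg n u). pose proof (enorm_nonneg n v).
  unfold enorm at 1. rewrite E.
  rewrite <- (sqrt_square (enorm u + enorm v)) by lra.
  apply sqrt_le_1_alt. rewrite <- (enorm_sq n u), <- (enorm_sq n v). nra.
Qed.

Lemma shift_dot n (p1 v w : vec n) t :
  edot w (vsub (fun i => p1 i + t * v i) p1) = t * edot w v.
Proof. unfold edot, vsub. rewrite <- fsum_scal. apply fsum_ext. intros; ring. Qed.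

Lemma shift_sq n (p1 v : vec n) t :
  enorm (vsub (fun i => p1 i + t * v i) p1) ^ 2 = t^2 * edot v v.
Proof. rewrite enorm_sq. unfold edot, vsub. rewrite <- fsum_scal. apply fsum_ext. intros; ring. Qed.

Lemma grad_zero n (f : vec n -> R) g L p1 : 0 <= L ->
  (forall p1 p2, f p2 <= f p1 + edot (g p1) (vsub p2 p1) + L / 2 * (enorm (vsub p2 p1))^2) ->
  (forall q, f p1 <= f q) -> edot (g p1) (g p1) = 0.
Proof.
  intros HL HF Hm.
  set (t := - / (L+1)).
  specialize (HF p1 (fun i => p1 i + t * g p1 i)).
  rewrite shift_dot, shift_sq in HF.
  specialize (Hm (fun i => p1 i + t * g p1 i)).
  pose proof (edot_nonneg n (g p1)). set (G := edot (g p1) (g p1)) in *.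
  assert (Ht : t * (L + 1) = -1) by (unfold t; field; lra).
  assert (Htn : t < 0) by (unfold t; assert (0 < / (L+1)) by (apply Rinv_0_lt_compat; lra); lra).
  assert (E : t * G + L / 2 * t^2 * G = t * G * (1/2 - t/2)) by (replace (L*t) with (-1 - t) by lra; nra).
  assert (0 <= t * G * (1/2 - t/2)) by lra.
  apply Rle_antisym; [|lra].
  assert (0 <= - t * (1/2 - t/2) * G * (-1)) by nra. nra.
Qed.

Lemma mu_le_L n (f : vec n -> R) g1 g2 L mu : (1 <= n)%nat ->
  (forall p1 p2, f p2 <= f p1 + edot (g1 p1) (vsub p2 p1) + L / 2 * (enorm (vsub p2 p1))^2) ->
  (forall p1 p2, f p2 >= f p1 + edot (g2 p1) (vsub p2 p1) + mu / 2 * (enorm (vsub p2 p1))^2) ->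
  mu <= L.
Proof.
  intros Hn H1 H2.
  set (p1 := fun _ : Fin.t n => 0). set (v := fun _ : Fin.t n => 1).
  assert (HV : 0 < edot v v).
  { destruct n as [|m]; [exfalso; inversion Hn|]. unfold edot; simpl.
    pose proof (fsum_nonneg m (fun i => v (Fin.FS i) * v (Fin.FS i)) (fun i => ltac:(unfold v; lra))).
    unfold v in *. lra. }
  pose proof (H1 p1 (fun i => p1 i + 1 * v i)) as A1.
  pose proof (H2 p1 (fun i => p1 i + 1 * v i)) as A2.
  pose proof (H1 p1 (fun i => p1 i + (-1) * v i)) as B1.
  pose proof (H2 p1 (fun i => p1 i + (-1) * v i)) as B2.
  rewrite !shift_dot, !shift_sq in *. nra.
Qed.

Lemma dist_inf n (A : vec n -> Prop) p : (exists z, A z) ->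
  is_inf (fun r => exists z, A z /\ r = enorm (vsub z p)) (dist_set A p).
Proof.
  intros [z0 Hz0]. unfold dist_set. apply epsilon_spec.
  set (S := fun r => exists z, A z /\ r = enorm (vsub z p)).
  destruct (completeness (fun r => S (-r))) as [M [HM1 HM2]].
  - exists 0. intros r [z [Hz Hr]]. pose proof (enorm_nonneg n (vsub z p)). lra.
  - exists (- enorm (vsub z0 p)). exists z0; split; auto; ring.
  - exists (-M). split.
    + intros r Hr. assert (-r <= M); [|lra]. apply HM1. red. rewrite Ropp_involutive. exact Hr.
    + intros b Hb. assert (M <= -b); [|lra]. apply HM2. intros r Hr. apply Hb in Hr. lra.
Qed.

Theorem lemma2 (np nc : nat) (Hnp : (1 <= np)%nat) (Hnc : (1 <= nc)%nat)
  (f0 : vec np -> R) (c : Fin.t nc -> vec np -> R) (soft : Fin.t nc -> bool)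
  (eps_psi rho L0 Lpsi mu0 beta : R) (pstar pu : vec np) :
  cont_diff f0 -> (forall i, cont_diff (c i)) ->
  0 < eps_psi -> 0 < rho ->
  (* (A1) *)
  (forall p, 0 <= f0 p) ->
  (* (A2) *)
  0 <= L0 -> 0 <= Lpsi -> in_F1L f0 L0 -> in_F1L (psi_fun c soft eps_psi) Lpsi ->
  (* (A3) *)
  0 < mu0 -> strongly_convex f0 mu0 -> convex_fun (psi_fun c soft eps_psi) ->
  (* (A4) *)
  (exists z, psi_fun c soft eps_psi z = 0) -> 0 < beta ->
  (forall p, psi_fun c soft eps_psi p >=
     beta * (dist_set (fun z => psi_fun c soft eps_psi z = 0) p)^2) ->
  (* p* minimizes f = f0 + rho psi, p_u minimizes f0 *)
  (forall q, f0 pstar + rho * psi_fun c soft eps_psi pstar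
             <= f0 q + rho * psi_fun c soft eps_psi q) ->
  (forall q, f0 pu <= f0 q) ->
  rho > L0 / beta ->
  let kappa0 := 2 * L0 / beta * sqrt (2 / mu0 * psi_fun c soft eps_psi pu) in
  (forall p, psi_fun c soft eps_psi p <=
      Lpsi / 2 * (enorm (vsub p pstar) + kappa0 / sqrt rho)^2) /\
  psi_fun c soft eps_psi pstar <= Lpsi * kappa0^2 / (2 * rho).
Proof.
  intros _ _ _ Hrho _ HL0 HLpsi [g0 [_ F0]] [gp [_ Fp]] Hmu [g2 [_ S0]] _ HA Hbeta Hdist Hstar Hu Hrb kappa0.
  set (psi := psi_fun c soft eps_psi) in *.
  set (A := fun z => psi z = 0) in *.
  assert (Hpsi0 : forall p, 0 <= psi p).
  { intros p. unfold psi, psi_fun. apply fsum_nonneg. intros i.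
    destruct (soft i); apply pow2_ge_0. }
  assert (HmuL : mu0 <= L0) by exact (mu_le_L np f0 g0 g2 L0 mu0 Hnp F0 S0).
  assert (HL0p : 0 < L0) by lra.
  assert (Hrb2 : rho * beta > L0).
  { apply (Rmult_lt_reg_r (/beta)). apply Rinv_0_lt_compat; lra.
    replace (rho * beta * / beta) with rho by (field; lra). unfold Rdiv in Hrb. lra. }
  set (m := dist_set A pstar).
  pose proof (dist_inf np A pstar HA) as [Hinf1 Hinf2]. fold m in Hinf1, Hinf2.
  assert (Hm0 : 0 <= m).
  { apply Hinf2. intros r [z [_ ->]]. apply enorm_nonneg. }
  set (G := edot (g0 pstar) (g0 pstar)).
  assert (HG0 : 0 <= G) by apply edot_nonneg.
  assert (HG : G <= 2 * L0 * (rho * psi pu)).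
  { pose proof (F0 pstar (fun i => pstar i + (- / L0) * g0 pstar i)) as H.
    rewrite shift_dot, shift_sq in H. fold G in H.
    pose proof (Hu (fun i => pstar i + (- / L0) * g0 pstar i)).
    pose proof (Hstar pu).
    assert (E : - / L0 * G + L0 / 2 * ((- / L0)^2 * G) = - (G / (2 * L0))) by (field; lra).
    assert (0 <= rho * psi pstar) by (apply Rmult_le_pos; [lra|apply Hpsi0]).
    assert (G / (2*L0) <= rho * psi pu) by lra.
    replace G with (2 * L0 * (G / (2*L0))) by (field; lra).
    apply Rmult_le_compat_l; lra. }
  set (a := rho * beta - L0 / 2).
  assert (Ha : 0 < a) by (unfold a; lra).
  assert (Hkey : forall z, A z ->
     rho * beta * m^2 <= G / (2*a) + (a + L0) / 2 * enorm (vsub z pstar) ^ 2).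
  { intros z Hz. pose proof (Hdist pstar) as H1. fold psi A m in H1.
    pose proof (Hstar z) as H2. unfold A in Hz. rewrite Hz in H2.
    pose proof (F0 pstar z) as H3.
    pose proof (edot_amgm np (g0 pstar) (vsub z pstar) a Ha) as H4.
    rewrite <- (enorm_sq np (vsub z pstar)) in H4. fold G in H4.
    assert (rho * (beta * m^2) <= rho * psi pstar) by (apply Rmult_le_compat_l; lra).
    lra. }
  set (cc := 2 * (rho * beta * m^2 - G / (2*a)) / (a + L0)).
  assert (Hb : sqrt (Rmax 0 cc) <= m).
  { apply Hinf2. intros r [z [Hz ->]].
    pose proof (Hkey z Hz) as H.
    set (d := enorm (vsub z pstar)) in *.
    assert (Hd : 0 <= d) by apply enorm_nonneg.
    assert (Hc : cc <= d * d).
    { apply (Rmult_le_reg_r (a + L0)). lra.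
      replace (cc * (a + L0)) with (2 * (rho * beta * m^2 - G / (2*a))) by (unfold cc; field; lra).
      lra. }
    rewrite <- (sqrt_square d) by exact Hd. apply sqrt_le_1_alt.
    apply Rmax_lub; nra. }
  assert (Hc : cc <= m^2).
  { pose proof (Rmax_r 0 cc). pose proof (Rmax_l 0 cc).
    rewrite <- (pow2_sqrt (Rmax 0 cc)) in H by lra.
    pose proof (sqrt_pos (Rmax 0 cc)). nra. }
  assert (Ham : a * a * (m * m) <= G).
  { assert (cc * (a + L0) <= m^2 * (a+L0)) by (apply Rmult_le_compat_r; lra).
    replace (cc * (a + L0)) with (2 * (rho * beta * m^2 - G / (2*a))) in H by (unfold cc; field; lra).
    replace (G / (2 * a)) with ((G / a) / 2) in H by (field; lra).
    assert (a * m^2 <= G / a).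
    { set (Ga := G / a) in *. unfold a in *. lra. }
    assert (a * (a * m^2) <= a * (G / a)) by (apply Rmult_le_compat_l; lra).
    replace (a * (G / a)) with G in H1 by (field; lra). nra. }
  set (S := sqrt (2 / mu0 * psi pu)).
  assert (HS0 : 0 <= S) by apply sqrt_pos.
  assert (HS2 : S * S = 2 / mu0 * psi pu).
  { apply sqrt_sqrt. apply Rmult_le_pos; [|apply Hpsi0]. unfold Rdiv; apply Rmult_le_pos; [lra|].
    left; apply Rinv_0_lt_compat; lra. }
  set (r := sqrt rho).
  assert (Hr : r * r = rho) by (apply sqrt_sqrt; lra).
  assert (Hr0 : 0 < r) by (apply sqrt_lt_R0; lra).
  set (T := r * L0 * S).
  assert (HT : G <= T * T).
  { replace (T * T) with (rho * L0 * L0 * (S * S)) by (unfold T; rewrite <- Hr; ring).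
    rewrite HS2.
    assert (E : rho * L0 * L0 * (2 / mu0 * psi pu) - 2 * L0 * (rho * psi pu)
              = 2 * L0 * rho * psi pu * ((L0 - mu0) / mu0)) by (field; lra).
    assert (0 <= 2 * L0 * rho * psi pu * ((L0 - mu0) / mu0)).
    { apply Rmult_le_pos. apply Rmult_le_pos; [|apply Hpsi0]. nra.
      unfold Rdiv; apply Rmult_le_pos; [lra|]. left; apply Rinv_0_lt_compat; lra. }
    lra. }
  set (K := kappa0 / r).
  assert (HK : kappa0 = 2 * L0 / beta * S) by reflexivity.
  assert (HaK : T <= a * K).
  { assert (E : a * K - T = L0 * S * (2 * a - beta * (r * r)) / (beta * r))
      by (unfold K, T; rewrite HK; field; lra).
    rewrite Hr in E. assert (2 * a - beta * rho > 0) by (unfold a; lra).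
    assert (0 <= L0 * S * (2 * a - beta * rho) / (beta * r)).
    { unfold Rdiv. apply Rmult_le_pos. apply Rmult_le_pos; nra.
      left; apply Rinv_0_lt_compat; nra. }
    lra. }
  assert (HmK : m <= K).
  { assert (HT0 : 0 <= T) by (unfold T; apply Rmult_le_pos; [apply Rmult_le_pos|]; lra).
    assert (Ham0 : 0 <= a * m) by (apply Rmult_le_pos; lra).
    assert (a * m <= T).
    { destruct (Rle_or_lt (a*m) T) as [h|h]; [exact h|].
      assert (T * T < (a*m) * (a*m)) by (apply Rmult_le_0_lt_compat; lra). nra. }
    apply (Rmult_le_reg_l a); lra. }
  assert (Hz : forall z p, A z -> psi p <= Lpsi / 2 * enorm (vsub p z) ^ 2).
  { intros z p Hz. pose proof (Fp z p) as H. unfold A in Hz. fold psi in H.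
    assert (Hg : edot (gp z) (gp z) = 0).
    { apply (grad_zero np psi gp Lpsi z HLpsi Fp). intros q. rewrite Hz. apply Hpsi0. }
    pose proof (cs np (gp z) (vsub p z)) as Hc'. unfold enorm at 1 in Hc'.
    rewrite Hg, sqrt_0, Rmult_0_l in Hc'. lra. }
  assert (Part1 : forall p, psi p <= Lpsi / 2 * (enorm (vsub p pstar) + K) ^ 2).
  { intros p. destruct HLpsi as [HLp|HLp].
    - set (d := enorm (vsub p pstar)).
      assert (Hb' : sqrt (2 * psi p / Lpsi) - d <= m).
      { apply Hinf2. intros rr [z [Hzz ->]].
        pose proof (Hz z p Hzz) as H.
        pose proof (triangle np p pstar z) as Ht. rewrite (enorm_sym np pstar z) in Ht.
        fold d in Ht.
        assert (He : 0 <= enorm (vsub p z)) by apply enorm_nonneg.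
        assert (2 * psi p / Lpsi <= enorm (vsub p z) * enorm (vsub p z)).
        { apply (Rmult_le_reg_r Lpsi). lra.
          replace (2 * psi p / Lpsi * Lpsi) with (2 * psi p) by (field; lra). nra. }
        assert (sqrt (2 * psi p / Lpsi) <= enorm (vsub p z)).
        { rewrite <- (sqrt_square (enorm (vsub p z))) by exact He. now apply sqrt_le_1_alt. }
        lra. }
      assert (Hq : 0 <= 2 * psi p / Lpsi).
      { unfold Rdiv. apply Rmult_le_pos. pose proof (Hpsi0 p); lra. left; apply Rinv_0_lt_compat; lra. }
      pose proof (pow2_sqrt _ Hq) as E. pose proof (sqrt_pos (2 * psi p / Lpsi)).
      assert (2 * psi p / Lpsi <= (d + K) ^ 2) by nra.
      assert (E2 : psi p = Lpsi / 2 * (2 * psi p / Lpsi)) by (field; lra).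
      rewrite E2. apply Rmult_le_compat_l; lra.
    - subst Lpsi. destruct HA as [z Hzz]. pose proof (Hz z p Hzz). lra. }
  split.
  - exact Part1.
  - pose proof (Part1 pstar) as H.
    assert (E0 : enorm (vsub pstar pstar) = 0).
    { unfold enorm. rewrite <- sqrt_0. f_equal. unfold edot, vsub.
      rewrite (fsum_ext np _ (fun i => 0 * 0)) by (intros; ring).
      rewrite fsum_scal. ring. }
    rewrite E0 in H.
    replace (Lpsi * kappa0 ^ 2 / (2 * rho)) with (Lpsi / 2 * (0 + K) ^ 2); [exact H|].
    unfold K. rewrite <- Hr. field. lra.
Qed.
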